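(* Let $X\neq\emptyset$ be a countable set and let $F=(F_x)_{x\in X}$ be a family of finite-dimensional complex vector spaces. Let $A\colon \Gamma(X;F)\to\Gamma(X;F)$ be a continuous linear operator. Then the following are equivalent: (i) $A$ is surjective; (ii) the dual operator $A'\colon \Gamma_c(X;F')\to\Gamma_c(X;F')$ is injective.
   Context: $\Gamma(X;F)=\prod_{x\in X}F_x$ is the space of all maps $f$ on $X$ with $f(x)\in F_x$ for all $x$, equipped with the product topology (each $F_x$ carries its unique Hausdorff vector space topology); equivalently the locally convex topology generated by the seminorms $p_K(f)=\sum_{x\in K}\|f(x)\|_x$, $K\subseteq X$ finite, where $\|\cdot\|_x$ is a fixed norm on $F_x$. $\Gamma_c(X;F)$ is the subspace of $f$ vanishing outside a finite set. $F'=(F_x')_{x\in X}$ is the family of dual spaces. $\Gamma_c(X;F')$ is identified with the continuous dual of $\Gamma(X;F)$ via the pairing $(\varphi,f)=\sum_{x\in X}\varphi(x)(f(x))$. A linear operator $A$ on $\Gamma(X;F)$ is continuous iff for every $x\in X$ there is a finite $K\subseteq X$ such that $Af(x)$ depends only on $f|_K$. For continuous $A$, the dual operator $A'\colon\Gamma_c(X;F')\to\Gamma_c(X;F')$ is defined by $(A'\varphi,f)=(\varphi,Af)$ for all $f\in\Gamma(X;F)$, $\varphi\in\Gamma_c(X;F')$. *)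

(* Defs.v *)
From HB Require Import structures.
From mathcomp Require Import all_boot all_order all_algebra.
From mathcomp Require Import boolp classical_sets fsbigop reals.
From mathcomp Require Import complex.
Set Implicit Arguments. Unset Strict Implicit. Unset Printing Implicit Defensive.
Import Order.TTheory GRing.Theory Num.Theory.
Local Open Scope ring_scope.

Section Sections.
Variables (K : fieldType) (X : choiceType) (F : X -> vectType K).

Definition Gam := forall x : X, F x.

Definition DualSec := forall x : X, 'Hom(F x, K^o).

(* Membership in Gamma_c(X;F'): vanishing outside a finite set. *)
Definition fin_supp (phi : DualSec) : Prop :=
  exists s : seq X, forall x, x \notin s -> phi x = 0.

(* The pairing (phi, f) = sum_x phi(x)(f(x)) (a finite sum for phi in Gamma_c). *)
Definition pairing (phi : DualSec) (f : Gam) : K :=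
  \sum_(x \in [set: X]) (phi x (f x) : K).

Definition lin_op (A : Gam -> Gam) : Prop :=
  forall (a : K) (f g : Gam),
    A (fun x => a *: f x + g x) = (fun x => a *: A f x + A g x).

(* Continuity of A w.r.t. the product topology, via the criterion:
   for every x there is a finite K such that Af(x) depends only on f|_K. *)
Definition cont_op (A : Gam -> Gam) : Prop :=
  forall x : X, exists Ks : seq X, forall f g : Gam,
    (forall y, y \in Ks -> f y = g y) -> A f x = A g x.

Definition dual_op (A : Gam -> Gam) (A' : DualSec -> DualSec) : Prop :=
  (forall phi, fin_supp phi -> fin_supp (A' phi)) /\
  (forall phi, fin_supp phi -> forall f : Gam, pairing (A' phi) f = pairing phi (A f)).

Definition surj_op (A : Gam -> Gam) : Prop := forall g : Gam, exists f, A f = g.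

Definition inj_on_Gc (A' : DualSec -> DualSec) : Prop :=
  forall phi psi, fin_supp phi -> fin_supp psi -> A' phi = A' psi -> phi = psi.

End Sections.

(* Main.v *)
Require Import Defs.
From HB Require Import structures.
From mathcomp Require Import all_boot all_order all_algebra.
From mathcomp Require Import boolp classical_sets fsbigop reals.
From mathcomp Require Import complex.
Set Implicit Arguments. Unset Strict Implicit. Unset Printing Implicit Defensive.
Import Order.TTheory GRing.Theory Num.Theory.
Local Open Scope ring_scope.

Section S.
Variables (K : fieldType) (X : countType) (F : X -> vectType K).

HB.instance Definition _ := gen_eqMixin (DualSec F).
HB.instance Definition _ := gen_choiceMixin (DualSec F).

Lemma regs (a : K) (b : K^o) : a *: b = a * b. Proof. by []. Qed.
Definition ds0 : DualSec F := fun x => 0.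
Definition dsadd (a b : DualSec F) : DualSec F := fun x => a x + b x.
Definition dsopp (a : DualSec F) : DualSec F := fun x => - a x.
Definition dsscale (k : K) (a : DualSec F) : DualSec F := fun x => k *: a x.

Lemma dsaddA : associative dsadd.
Proof. by move=> a b c; apply: functional_extensionality_dep => x; rewrite /dsadd addrA. Qed.
Lemma dsaddC : commutative dsadd.
Proof. by move=> a b; apply: functional_extensionality_dep => x; rewrite /dsadd addrC. Qed.
Lemma dsadd0 : left_id ds0 dsadd.
Proof. by move=> a; apply: functional_extensionality_dep => x; rewrite /dsadd add0r. Qed.
Lemma dsaddN : left_inverse ds0 dsopp dsadd.
Proof. by move=> a; apply: functional_extensionality_dep => x; rewrite /dsadd addNr. Qed.
HB.instance Definition _ := GRing.isZmodule.Build (DualSec F) dsaddA dsaddC dsadd0 dsaddN.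

Lemma dsscaleA a b v : dsscale a (dsscale b v) = dsscale (a * b) v.
Proof. by apply: functional_extensionality_dep => x; rewrite /dsscale scalerA. Qed.
Lemma dsscale1 : left_id 1 dsscale.
Proof. by move=> v; apply: functional_extensionality_dep => x; rewrite /dsscale scale1r. Qed.
Lemma dsscaleDr : right_distributive dsscale +%R.
Proof. by move=> a u v; apply: functional_extensionality_dep => x; rewrite /dsscale /= /dsadd scalerDr. Qed.
Lemma dsscaleDl v : {morph dsscale^~ v: a b / a + b}.
Proof. by move=> a b; apply: functional_extensionality_dep => x; rewrite /dsscale /= /dsadd scalerDl. Qed.
HB.instance Definition _ := GRing.Zmodule_isLmodule.Build K (DualSec F) dsscaleA dsscale1 dsscaleDr dsscaleDl.

Lemma dsE_add (a b : DualSec F) x : (a + b) x = a x + b x. Proof. by []. Qed.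
Lemma dsE_scale k (a : DualSec F) x : (k *: a) x = k *: a x. Proof. by []. Qed.
Lemma dsE_0 x : (0 : DualSec F) x = 0. Proof. by []. Qed.
Lemma dsE_opp (a : DualSec F) x : (- a) x = - a x. Proof. by []. Qed.
Lemma dsE_sum I (r : seq I) (P : pred I) (G : I -> DualSec F) x :
  (\sum_(i <- r | P i) G i) x = \sum_(i <- r | P i) G i x.
Proof. by elim/big_rec2: _ => // i y1 y2 _ <-. Qed.

Definition dl (x : X) (l : 'Hom(F x, K^o)) : DualSec F :=
  fun y => match x =P y with
           | ReflectT e => ecast y 'Hom(F y, K^o) e l
           | ReflectF _ => 0 end.
Definition dg (x : X) (v : F x) : Gam F :=
  fun y => match x =P y with
           | ReflectT e => ecast y (F y) e v
           | ReflectF _ => 0 end.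

Lemma dl_eq x (l : 'Hom(F x, K^o)) : dl l x = l.
Proof. by rewrite /dl; case: eqP => // e; rewrite (eq_irrelevance e erefl). Qed.
Lemma dl_neq x (l : 'Hom(F x, K^o)) y : x != y -> dl l y = 0.
Proof. by rewrite /dl; case: eqP. Qed.
Lemma dg_eq x (v : F x) : dg v x = v.
Proof. by rewrite /dg; case: eqP => // e; rewrite (eq_irrelevance e erefl). Qed.
Lemma dg_neq x (v : F x) y : x != y -> dg v y = 0.
Proof. by rewrite /dg; case: eqP. Qed.

Lemma dl_lin x a (l m : 'Hom(F x, K^o)) : dl (a *: l + m) = a *: dl l + dl m.
Proof.
apply: functional_extensionality_dep => y; rewrite dsE_add dsE_scale.
have [<-|nxy] := eqVneq x y; first by rewrite !dl_eq.
by rewrite !dl_neq // scaler0 addr0.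
Qed.
Lemma dl0 x : dl (0 : 'Hom(F x, K^o)) = 0.
Proof.
apply: functional_extensionality_dep => y.
have [<-|nxy] := eqVneq x y; first by rewrite !dl_eq.
by rewrite !dl_neq.
Qed.
Lemma dl_add x (l m : 'Hom(F x, K^o)) : dl (l + m) = dl l + dl m.
Proof. by have := dl_lin 1 l m; rewrite !scale1r. Qed.
Lemma dl_scale x a (l : 'Hom(F x, K^o)) : dl (a *: l) = a *: dl l.
Proof. by have := dl_lin a l 0; rewrite !addr0 dl0 addr0. Qed.
Lemma dl_sum x I (r : seq I) (G : I -> 'Hom(F x, K^o)) :
  dl (\sum_(i <- r) G i) = \sum_(i <- r) dl (G i).
Proof. by elim: r => [|i r IH]; rewrite ?big_nil ?big_cons ?dl0 // dl_add IH. Qed.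

Lemma pairingE (phi : DualSec F) (f : Gam F) s :
  (forall x, x \notin s -> phi x = 0) ->
  pairing phi f = \sum_(x <- undup s) (phi x (f x) : K).
Proof.
move=> hs; rewrite (fsbig_seq _ _ (undup_uniq s)) /pairing.
apply/esym/fsbig_widen => // y [_ /=]; rewrite mem_undup => ys.
by rewrite /preimage /= hs ?lfunE //; apply/negP.
Qed.

Lemma pairing_dg (phi : DualSec F) x (v : F x) : pairing phi (dg v) = phi x v.
Proof.
rewrite /pairing -(fsbig_widen [set` [:: x]]) //.
  by rewrite -fsbig_seq // big_seq1 dg_eq.
move=> y [_ /=] nyx.
by rewrite dg_neq ?linear0 //; apply/eqP => e; apply: nyx; rewrite e inE.
Qed.

Lemma pairing_dl x (l : 'Hom(F x, K^o)) (f : Gam F) : pairing (dl l) f = l (f x).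
Proof.
rewrite /pairing -(fsbig_widen [set` [:: x]]) //.
  by rewrite -fsbig_seq // big_seq1 dl_eq.
move=> y [_ /=] nyx.
by rewrite dl_neq ?lfunE //; apply/eqP => e; apply: nyx; rewrite e inE.
Qed.

Lemma separation (phi psi : DualSec F) :
  (forall f, pairing phi f = pairing psi f) -> phi = psi.
Proof.
move=> h; apply: functional_extensionality_dep => x; apply/lfunP => v.
by have := h (dg v); rewrite !pairing_dg.
Qed.

Lemma fs0 : fin_supp (0 : DualSec F).
Proof. by exists [::]. Qed.
Lemma fs_lin a (phi psi : DualSec F) :
  fin_supp phi -> fin_supp psi -> fin_supp (a *: phi + psi).
Proof.
move=> [s hs] [t ht]; exists (s ++ t) => x; rewrite mem_cat negb_or => /andP[xs xt].
by rewrite dsE_add dsE_scale hs // ht // scaler0 addr0.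
Qed.
Lemma fs_add (phi psi : DualSec F) :
  fin_supp phi -> fin_supp psi -> fin_supp (phi + psi).
Proof. by move=> h1 h2; have := fs_lin 1 h1 h2; rewrite scale1r. Qed.
Lemma fs_scale a (phi : DualSec F) : fin_supp phi -> fin_supp (a *: phi).
Proof. by move=> h; have := fs_lin a h fs0; rewrite addr0. Qed.
Lemma fs_dl x (l : 'Hom(F x, K^o)) : fin_supp (dl l).
Proof.
by exists [:: x] => y; rewrite inE => nyx; rewrite dl_neq // eq_sym.
Qed.
Lemma fs_sum I (r : seq I) (G : I -> DualSec F) :
  (forall i, fin_supp (G i)) -> fin_supp (\sum_(i <- r) G i).
Proof.
by move=> h; elim/big_ind: _ => //; [apply: fs0 | apply: fs_add].
Qed.

Lemma pairing_lin a (phi psi : DualSec F) f :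
  fin_supp phi -> fin_supp psi ->
  pairing (a *: phi + psi) f = a * pairing phi f + pairing psi f.
Proof.
move=> [s hs] [t ht].
have hst : forall x, x \notin s ++ t -> phi x = 0 /\ psi x = 0.
  by move=> x; rewrite mem_cat negb_or => /andP[/hs -> /ht ->].
rewrite (@pairingE _ _ (s ++ t)); last by move=> x /hst [e1 e2]; rewrite dsE_add dsE_scale e1 e2 scaler0 addr0.
rewrite (@pairingE phi _ (s ++ t)); last by move=> x /hst [].
rewrite (@pairingE psi _ (s ++ t)); last by move=> x /hst [].
rewrite mulr_sumr -big_split /=; apply: eq_bigr => x _.
rewrite dsE_add dsE_scale add_lfunE scale_lfunE; congr (_ + _); exact: regs.
Qed.

Lemma pairing0 f : pairing (0 : DualSec F) f = 0.
Proof. rewrite (@pairingE _ _ [::]); first exact: big_nil. by move=> x _; exact: dsE_0. Qed.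

Lemma decomp (phi : DualSec F) (s : seq X) : (forall x, x \notin s -> phi x = 0) ->
  phi = \sum_(x <- undup s) dl (phi x).
Proof.
move=> hs; apply: functional_extensionality_dep => y.
rewrite dsE_sum.
case: (boolP (y \in undup s)) => [ys|nys].
  rewrite (bigD1_seq y) ?undup_uniq //= dl_eq.
  by rewrite big1 ?addr0 // => x nxy; rewrite dl_neq.
rewrite big1_seq; last first.
  by move=> x /andP[_ xs]; rewrite dl_neq //; apply: contraNneq nys => <-.
by apply: hs; rewrite -mem_undup.
Qed.


Section Main.
Variables (A : Gam F -> Gam F) (A' : DualSec F -> DualSec F).
Hypothesis Hfs : forall phi, fin_supp phi -> fin_supp (A' phi).
Hypothesis Hp : forall phi, fin_supp phi -> forall f, pairing (A' phi) f = pairing phi (A f).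

Lemma A'0 : A' 0 = 0.
Proof.
apply: separation => f; rewrite Hp ?pairing0 //; exact: fs0.
Qed.

Lemma A'lin a phi psi : fin_supp phi -> fin_supp psi ->
  A' (a *: phi + psi) = a *: A' phi + A' psi.
Proof.
move=> h1 h2; apply: separation => f.
rewrite Hp; last exact: fs_lin.
rewrite (pairing_lin _ _ h1 h2). rewrite (pairing_lin _ _ (Hfs h1) (Hfs h2)). by rewrite !Hp.
Qed.

Lemma dir1 : surj_op A -> inj_on_Gc A'.
Proof.
move=> hs phi psi h1 h2 e; apply: separation => f.
have [h <-] := hs f; by rewrite -!Hp // e.
Qed.

Hypothesis Hinj : inj_on_Gc A'.
Variable g : Gam F.

Definition bs (x : X) := vbasis (fullv : {vspace 'Hom(F x, K^o)}).
Definition u (k : nat) : DualSec F :=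
  if @unpickle (X * nat)%type k is Some p then dl (bs p.1)`_p.2 else 0.
Lemma uE x i : u (pickle (x, i)) = dl (bs x)`_i.
Proof. by rewrite /u pickleK. Qed.

Definition Y n (phi : DualSec F) := exists psi, fin_supp psi /\
  exists c : nat -> K, phi = A' psi + \sum_(k < n) c k *: u k.

Lemma Y_lin n a y y' : Y n y -> Y n y' -> Y n (a *: y + y').
Proof.
move=> [p [hp [c ->]]] [p' [hp' [c' ->]]].
exists (a *: p + p'); split; first exact: fs_lin.
exists (fun k => a * c k + c' k); rewrite A'lin // scalerDr scaler_sumr.
rewrite addrACA -big_split /=; congr (_ + _); apply: eq_bigr => k _.
by rewrite scalerA scalerDl.
Qed.

Lemma Y0 n : Y n 0.
Proof.
exists 0; split; first exact: fs0.
by exists (fun _ => 0); rewrite A'0 big1 ?addr0 // => k _; rewrite scale0r.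
Qed.

Lemma Y_add n y y' : Y n y -> Y n y' -> Y n (y + y').
Proof. by move=> h1 h2; have := Y_lin 1 h1 h2; rewrite scale1r. Qed.
Lemma Y_scale n a y : Y n y -> Y n (a *: y).
Proof. by move=> h; have := Y_lin a h (Y0 n); rewrite addr0. Qed.
Lemma Y_W n psi : fin_supp psi -> Y n (A' psi).
Proof.
move=> h; exists psi; split => //.
by exists (fun _ => 0); rewrite big1 ?addr0 // => k _; rewrite scale0r.
Qed.

Lemma YS n z : Y n.+1 z <-> exists y a, Y n y /\ z = y + a *: u n.
Proof.
split.
  move=> [p [hp [c ->]]]; exists (A' p + \sum_(k < n) c k *: u k), (c n).
  split; last by rewrite big_ord_recr /= addrA.
  by exists p; split => //; exists c.
move=> [y [a [[p [hp [c ->]]] ->]]]; exists p; split => //.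
exists (fun k => if k == n then a else c k).
rewrite big_ord_recr /= eqxx -addrA; congr (_ + (_ + _)).
by apply: eq_bigr => k _; rewrite ltn_eqF.
Qed.

Lemma Y_mono n m y : (n <= m)%N -> Y n y -> Y m y.
Proof.
elim: m => [|m IH]; first by rewrite leqn0 => /eqP ->.
rewrite leq_eqVlt => /orP[/eqP -> //|]; rewrite ltnS => nm hy.
by apply/YS; exists y, 0; rewrite scale0r addr0; split => //; apply: IH.
Qed.

Lemma Y_u k : Y k.+1 (u k).
Proof. by apply/YS; exists 0, 1; rewrite scale1r add0r; split => //; apply: Y0. Qed.

Lemma fs_u k : fin_supp (u k).
Proof. rewrite /u; case: unpickle => [p|]; [exact: fs_dl | exact: fs0]. Qed.

Lemma Y_fs n y : Y n y -> fin_supp y.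
Proof.
move=> [p [hp [c ->]]]; apply: fs_add; first exact: Hfs.
by elim/big_ind: _ => //; [apply: fs0 | apply: fs_add | move=> k _; apply/fs_scale/fs_u].
Qed.

Lemma cover phi : fin_supp phi -> exists n, Y n phi.
Proof.
move=> [s hs]; rewrite (decomp hs).
elim/big_ind: _ => //.
- by exists 0; apply: Y0.
- move=> a b [n1 h1] [n2 h2]; exists (maxn n1 n2).
  by apply: Y_add; [apply: (Y_mono (leq_maxl _ _)) | apply: (Y_mono (leq_maxr _ _))].
move=> x _; rewrite (coord_vbasis (memvf (phi x))) dl_sum.
elim/big_ind: _ => //.
- by exists 0; apply: Y0.
- move=> a b [n1 h1] [n2 h2]; exists (maxn n1 n2).
  by apply: Y_add; [apply: (Y_mono (leq_maxl _ _)) | apply: (Y_mono (leq_maxr _ _))].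
move=> i _; rewrite dl_scale; exists (pickle (x, val i)).+1.
by apply: Y_scale; rewrite -uE; apply: Y_u.
Qed.


Definition nu0 (phi : DualSec F) : K :=
  match pselect (exists psi, fin_supp psi /\ A' psi = phi) with
  | left h => pairing (proj1_sig (cid h)) g
  | right _ => 0 end.

Fixpoint nu (n : nat) (phi : DualSec F) : K :=
  match n with
  | 0 => nu0 phi
  | m.+1 => if pselect (Y m (u m)) then nu m phi else
      match pselect (exists p : DualSec F * K, Y m p.1 /\ phi = p.1 + p.2 *: u m) with
      | left h => nu m (proj1_sig (cid h)).1
      | right _ => 0 end
  end.

Lemma nu0_W psi : fin_supp psi -> nu0 (A' psi) = pairing psi g.
Proof.
move=> hs; rewrite /nu0; case: pselect => [h|[]]; last by exists psi.
by case: cid => p [hp e] /=; rewrite (Hinj hp hs e).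
Qed.

Lemma Y_uniq n y1 y2 a1 a2 : ~ Y n (u n) -> Y n y1 -> Y n y2 ->
  y1 + a1 *: u n = y2 + a2 *: u n -> y1 = y2.
Proof.
move=> hn h1 h2 e.
have [ea|na] := eqVneq a1 a2; first by move: e; rewrite ea => /addIr.
exfalso; apply: hn.
have e2 : (a1 - a2) *: u n = (-1) *: y1 + y2.
  have e' : a1 *: u n = y2 + a2 *: u n - y1 by rewrite -e addrC addKr.
  by rewrite scalerBl e' scaleN1r addrAC addrK addrC.
have -> : u n = (a1 - a2)^-1 *: ((-1) *: y1 + y2).
  by rewrite -e2 scalerA mulVf ?scale1r // subr_eq0.
by apply: Y_scale; apply: Y_lin.
Qed.

Lemma nuS_dec n y a : ~ Y n (u n) -> Y n y -> nu n.+1 (y + a *: u n) = nu n y.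
Proof.
move=> hn hy /=; case: pselect => [h|nh]; first by exfalso; apply: hn.
case: pselect => [h|[]]; last by exists (y, a).
case: cid => [[y' a']] /= [hy' e].
by rewrite (Y_uniq hn hy hy' e).
Qed.

Lemma nu_step n y : Y n y -> nu n.+1 y = nu n y.
Proof.
move=> hy; case: (pselect (Y n (u n))) => hn.
  by rewrite /=; case: pselect.
by have := nuS_dec 0 hn hy; rewrite scale0r addr0.
Qed.

Lemma Inv n : (forall a y y', Y n y -> Y n y' -> nu n (a *: y + y') = a * nu n y + nu n y')
  /\ (forall psi, fin_supp psi -> nu n (A' psi) = pairing psi g).
Proof.
elim: n => [|n [L W]].
  split; last by move=> psi hs; exact: nu0_W.
  move=> a y y' [p [hp [c ->]]] [p' [hp' [c' ->]]]; rewrite !big_ord0 !addr0 /=.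
  rewrite -A'lin // !nu0_W //; last exact: fs_lin.
  exact: pairing_lin.
split; last by move=> psi hs; rewrite nu_step ?W //; apply: Y_W.
move=> a y y'; case: (pselect (Y n (u n))) => hn.
  have sub z : Y n.+1 z -> Y n z.
    by move/YS => [z1 [b [hz ->]]]; apply: Y_add => //; apply: Y_scale.
  move=> /sub hy /sub hy'; rewrite !nu_step //; last exact: Y_lin.
  exact: L.
move=> /YS [y1 [a1 [h1 ->]]] /YS [y1' [a1' [h1' ->]]].
have -> : a *: (y1 + a1 *: u n) + (y1' + a1' *: u n) = (a *: y1 + y1') + (a * a1 + a1') *: u n.
  by rewrite scalerDr scalerA scalerDl addrACA.
by rewrite !nuS_dec //; [apply: L | apply: Y_lin].
Qed.

Lemma nu_stable n m y : Y n y -> (n <= m)%N -> nu m y = nu n y.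
Proof.
move=> hy; elim: m => [|m IH]; first by rewrite leqn0 => /eqP ->.
rewrite leq_eqVlt => /orP[/eqP -> //|]; rewrite ltnS => nm.
by rewrite nu_step ?IH //; apply: Y_mono hy.
Qed.

Definition nuinf (phi : DualSec F) : K :=
  match pselect (exists n, Y n phi) with
  | left h => nu (proj1_sig (cid h)) phi
  | right _ => 0 end.

Lemma nuinfE n phi : Y n phi -> nuinf phi = nu n phi.
Proof.
move=> hy; rewrite /nuinf; case: pselect => [h|[]]; last by exists n.
case: cid => m hm /=.
by rewrite -(nu_stable hm (leq_maxl m n)) -(nu_stable hy (leq_maxr m n)).
Qed.

Lemma nuinf_lin a phi phi' : fin_supp phi -> fin_supp phi' ->
  nuinf (a *: phi + phi') = a * nuinf phi + nuinf phi'.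
Proof.
move=> /cover [n1 h1] /cover [n2 h2].
have h1' := Y_mono (leq_maxl n1 n2) h1; have h2' := Y_mono (leq_maxr n1 n2) h2.
rewrite !(nuinfE h1') (nuinfE h2') (nuinfE (Y_lin a h1' h2')).
by case: (Inv (maxn n1 n2)) => L _; apply: L.
Qed.

Lemma nuinf_W psi : fin_supp psi -> nuinf (A' psi) = pairing psi g.
Proof.
move=> hs; rewrite (nuinfE (Y_W 0 hs)); case: (Inv 0) => _ W; exact: W.
Qed.

Lemma nuinf0 : nuinf 0 = 0.
Proof. by rewrite -A'0 nuinf_W ?pairing0 //; exact: fs0. Qed.

Lemma nuinf_scale a phi : fin_supp phi -> nuinf (a *: phi) = a * nuinf phi.
Proof.
move=> h; have := nuinf_lin a h fs0; rewrite !addr0 => ->; by rewrite nuinf0 addr0.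
Qed.

Lemma nuinf_sum I (r : seq I) (G : I -> DualSec F) : (forall i, fin_supp (G i)) ->
  nuinf (\sum_(i <- r) G i) = \sum_(i <- r) nuinf (G i).
Proof.
move=> h; elim: r => [|i r IH]; first by rewrite !big_nil nuinf0.
rewrite !big_cons -IH; have := nuinf_lin 1 (h i) (fs_sum r h).
by rewrite !scale1r mul1r.
Qed.

Definition eb x := vbasis (fullv : {vspace F x}).
Definition cf x i : 'Hom(F x, K^o) := linfun (coord (eb x) i : F x -> K^o).
Arguments cf : clear implicits.
Definition fsol : Gam F := fun x =>
  \sum_(i < \dim (fullv : {vspace F x})) nuinf (dl (cf x i)) *: (eb x)`_i.

Lemma hom_dec x (l : 'Hom(F x, K^o)) :
  l = \sum_(i < \dim (fullv : {vspace F x})) l (eb x)`_i *: cf x i.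
Proof.
apply/lfunP => v; rewrite sum_lfunE {1}(coord_vbasis (memvf v)) linear_sum.
apply: eq_bigr => i _; rewrite linearZ scale_lfunE lfunE /= !regs mulrC //.
Qed.

Lemma fsolE x (l : 'Hom(F x, K^o)) : l (fsol x) = nuinf (dl l).
Proof.
rewrite {2}(hom_dec l) dl_sum nuinf_sum; last by move=> i; apply/fs_dl.
rewrite /fsol linear_sum; apply: eq_bigr => i _.
rewrite linearZ dl_scale nuinf_scale; last exact: fs_dl.
exact: mulrC.
Qed.

Lemma solve : A fsol = g.
Proof.
have hp psi : fin_supp psi -> pairing psi (A fsol) = pairing psi g.
  move=> hs; rewrite -Hp //; have [s hs'] := Hfs hs.
  rewrite (pairingE _ hs'); under eq_bigr do rewrite fsolE.
  rewrite -nuinf_sum; last by move=> i; exact: fs_dl.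
  rewrite -(nuinf_W hs); congr nuinf; exact/esym/decomp.
apply: functional_extensionality_dep => x.
have hl (l : 'Hom(F x, K^o)) : l (A fsol x) = l (g x).
  by have := hp _ (fs_dl l); rewrite !pairing_dl.
rewrite (coord_vbasis (memvf (A fsol x))) (coord_vbasis (memvf (g x))).
apply: eq_bigr => i _; congr (_ *: _).
by have := hl (cf x i); rewrite !lfunE.
Qed.

End Main.

Lemma dir2 (A : Gam F -> Gam F) (A' : DualSec F -> DualSec F) :
  dual_op A A' -> inj_on_Gc A' -> surj_op A.
Proof.
move=> [h1 h2] hi g; exists (fsol A' g); exact: solve.
Qed.

End S.

Theorem theorem2p1 (R : realType) (X : countType) (x0 : X)
    (F : X -> vectType R[i]) (A : Gam F -> Gam F) (A' : DualSec F -> DualSec F) :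
  lin_op A -> cont_op A -> dual_op A A' ->
  (surj_op A <-> inj_on_Gc A').
Proof.
move=> _ _ hd; split; first by case: hd => h1 h2; apply: dir1.
exact: dir2.
Qed.
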